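(* Let $T:[e,+\infty)\to[0,+\infty)$ be a non-decreasing continuous function such that $$\sigma_2^{\log}:=\limsup_{r\to+\infty}\frac{\log^+\log^+T(r)}{\log\log r}<1,$$ and let $\delta\in(0,1-\sigma_2^{\log})$. Then $$T(r\log r)=T(r)+o\!\left(\frac{T(r)}{(\log r)^{\delta}}\right)$$ as $r\to\infty$ outside a set $F\subset[e,\infty)$ satisfying $\int_{F\cap[e,+\infty)}\frac{dt}{t\log t}<+\infty$.
   Context: $\log^+A=\max\{0,\log A\}$ for $A\ge 0$. *)

(* Defs.v *)
From HB Require Import structures.
From mathcomp Require Import all_boot all_order all_algebra.
From mathcomp Require Import all_classical all_reals all_analysis.
Set Implicit Arguments. Unset Strict Implicit. Unset Printing Implicit Defensive.
Import Order.TTheory GRing.Theory Num.Theory.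
Import numFieldNormedType.Exports.
Local Open Scope classical_set_scope.
Local Open Scope ring_scope.

Definition logp {R : realType} (A : R) : R := if 1 < A then ln A else 0.

Definition sigma2log {R : realType} (T : R -> R) : \bar R :=
  limf_esup (fun r : R => (logp (logp (T r)) / ln (ln r))%:E) (pinfty_nbhs R).

(* Main.v *)
Require Import Defs.
From HB Require Import structures.
From mathcomp Require Import all_boot all_order all_algebra.
From mathcomp Require Import all_classical all_reals all_analysis.
From mathcomp Require Import ring lra measurable_realfun.
Import Order.TTheory GRing.Theory Num.Theory.
Import numFieldNormedType.Exports.
Local Open Scope classical_set_scope.
Local Open Scope ring_scope.
Set Implicit Arguments. Unset Strict Implicit.
Section H2.
Variable R : realType.

Lemma ln_gt1 (x : R) : expR 1 <= x -> 1 <= ln x.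
Proof.
move=> h; have x0 : 0 < x by apply: lt_le_trans (expR_gt0 _) h.
by rewrite -(expRK 1) ler_ln ?posrE ?expR_gt0.
Qed.

Lemma cont_f (x : R) : 1 < x -> {for x, continuous (fun t : R => (t * ln t)^-1)}.
Proof.
move=> x1.
have x0 : 0 < x by apply: lt_trans x1.
apply: continuousV.
  by rewrite mulf_neq0 ?gt_eqF ?ln_gt0.
apply: continuousM; first exact: cvg_id.
exact: continuous_ln.
Qed.

Lemma cont_lnln (x : R) : 1 < x -> {for x, continuous (fun t : R => ln (ln t))}.
Proof.
move=> x1.
have x0 : 0 < x by apply: lt_trans x1.
apply: (@continuous_comp _ _ _ (@ln R) (@ln R)).
  exact: continuous_ln.
by apply: continuous_ln; rewrite ln_gt0.
Qed.

Lemma int_loglog (a b : R) : expR 1 <= a -> a < b ->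
  (\int[lebesgue_measure]_(x in `[a, b]) ((x * ln x)^-1)%:E =
   (ln (ln b) - ln (ln a))%:E)%E.
Proof.
move=> ea ab.
have a1 : 1 < a by apply: lt_le_trans ea; rewrite -expR0 ltr_expR.
have gt1 : forall x, a <= x -> 1 < x by move=> x ax; apply: lt_le_trans ax.
rewrite EFinB.
apply: (@continuous_FTC2 R (fun t => (t * ln t)^-1) (fun t => ln (ln t))) => //.
- apply: continuous_in_subspaceT => x; rewrite inE /= in_itv /= => /andP[ax _].
  exact: cont_f (gt1 _ ax).
- split.
  + move=> x; rewrite in_itv /= => /andP[ax _].
    have x1 := gt1 _ (ltW ax).
    have x0 : 0 < x by apply: lt_trans x1.
    have := is_derive1_comp (is_derive1_ln (ln_gt0 x1)) (is_derive1_ln x0).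
    by case.
  + apply: cvg_at_right_filter; exact: cont_lnln.
  + apply: cvg_at_left_filter; apply: cont_lnln; apply: gt1; exact: ltW.
- move=> x; rewrite in_itv /= => /andP[ax _].
  have x1 := gt1 _ (ltW ax).
  have x0 : 0 < x by apply: lt_trans x1.
  have D := is_derive1_comp (is_derive1_ln (ln_gt0 x1)) (is_derive1_ln x0).
  rewrite derive1E; have -> := @derive_val _ _ _ _ _ _ _ D. by rewrite invfM mulrC.
Qed.
End H2.
Definition seqL {R : realType} (L0 : R) (n : nat) : R := iter n (fun x => x + ln x) L0.

Section SeqL.
Variable R : realType.
Variable L0 : R.
Hypothesis HL0 : expR 1 <= L0.
Local Notation L := (seqL L0).

Lemma ln_ge1 {x : R} : expR 1 <= x -> 1 <= ln x.
Proof.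
move=> h; have x0 : 0 < x by apply: lt_le_trans (expR_gt0 _) h.
by rewrite -(expRK 1) ler_ln ?posrE ?expR_gt0.
Qed.

Lemma LS k : L k.+1 = L k + ln (L k).
Proof. by rewrite /seqL iterS. Qed.

Lemma L0E : L 0 = L0.
Proof. by []. Qed.

Lemma Lge k : expR 1 <= L k.
Proof.
elim: k => [//|k IH]; rewrite LS.
have := ln_ge1 IH; lra.
Qed.

Lemma Lpos k : 0 < L k.
Proof. by apply: lt_le_trans (Lge k); exact: expR_gt0. Qed.

Lemma LlnL k : 1 <= ln (L k).
Proof. exact: ln_ge1 (Lge k). Qed.

Lemma Lstep k : L k + 1 <= L k.+1.
Proof. by rewrite LS; have := LlnL k; lra. Qed.

Lemma Llin k : L0 + k%:R <= L k.
Proof.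
elim: k => [|k IH]; first by rewrite addr0.
rewrite -natr1; have := Lstep k; lra.
Qed.

Lemma Ldouble k : L k.+1 <= 2 * L k.
Proof. by rewrite LS; have := ln_sublinear (Lpos k); lra. Qed.

Lemma Lmono i j : (i <= j)%N -> L i <= L j.
Proof.
elim: j => [|j IH]; first by rewrite leqn0 => /eqP ->.
rewrite leq_eqVlt => /orP[/eqP -> //|]; rewrite ltnS => /IH h.
by apply: le_trans h _; have := Lstep j; lra.
Qed.

Lemma rS k : expR (L k.+1) = expR (L k) * L k.
Proof. by rewrite LS expRD lnK // posrE Lpos. Qed.

Lemma block (x : R) : L0 <= x -> exists k, L k <= x < L k.+1.
Proof.
move=> hx.
have [n hn] : exists n : nat, x < L n.
  have x0 : 0 <= x - L0 by lra.
  exists (Num.Def.archi_bound (x - L0)).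
  have := archi_boundP x0; have := Llin (Num.Def.archi_bound (x - L0)); lra.
have ex : exists k, x < L k.+1.
  by exists n; apply: lt_le_trans hn _; apply: Lmono.
case: (ex_minnP ex) => m hm hmin.
exists m; rewrite hm andbT.
case: m hm hmin => [|j] hm hmin //.
by rewrite leNgt; apply/negP => /hmin; rewrite ltnn.
Qed.
End SeqL.
Section Growth.
Variable R : realType.

Lemma choose_c (s : \bar R) (delta : R) : (s < 1%:E)%E ->
  (delta%:E < 1%:E - s)%E -> exists c : R, (s < c%:E)%E /\ c + delta < 1.
Proof.
case: s => [r| |] hs hd.
- exists ((r + 1 - delta) / 2).
  rewrite -EFinB lte_fin in hd.
  by rewrite lte_fin; split; lra.
- by rewrite ltNge leey in hs.
- by exists (- delta); split; [exact: ltNyr | lra].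
Qed.

Lemma growth (T : R -> R) (c : R) : (sigma2log T < c%:E)%E ->
  0 < c /\ exists R1, expR 1 < R1 /\
    forall r, R1 <= r -> ln (T r) <= 1 + expR (c * ln (ln r)).
Proof.
rewrite /sigma2log limf_esupE => /ereal_inf_lt [y [V hV <-]] hlt.
case: hV => M [Mr HM].
set f := fun r : R => (logp (logp (T r)) / ln (ln r))%:E.
have hf : forall r, M < r -> logp (logp (T r)) / ln (ln r) < c.
  move=> r Mr'; rewrite -lte_fin; apply: le_lt_trans hlt.
  by apply: ereal_sup_ubound; exists r => //; exact: HM.
set R1 := Num.max M (expR 1) + 1.
have le_max_r_tmp : expR 1 <= Num.max M (expR 1) by rewrite le_max lexx orbT.
have le_max_l_tmp : M <= Num.max M (expR 1) by rewrite le_max lexx.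
have R1e : expR 1 < R1 by rewrite /R1; have := le_max_r_tmp; lra.
have R1M : M < R1 by rewrite /R1; have := le_max_l_tmp; lra.
have key : forall r, R1 <= r -> logp (logp (T r)) < c * ln (ln r) /\ 0 < ln (ln r).
  move=> r hr.
  have r0 : 0 < r by apply: lt_trans (expR_gt0 1) (lt_le_trans R1e hr).
  have lr : 1 < ln r.
    by rewrite -(expRK 1) ltr_ln ?posrE ?expR_gt0 //; apply: lt_le_trans hr.
  have llr : 0 < ln (ln r) by rewrite ln_gt0.
  split => //.
  by rewrite -ltr_pdivrMr //; apply: hf; apply: lt_le_trans hr.
have logp_ge0 : forall A : R, 0 <= logp A.
  by move=> A; rewrite /logp; case: ifP => // /ltW h; exact: ln_ge0.
split.
  have [h1 h2] := key R1 (lexx _).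
  have := logp_ge0 (logp (T R1)).
  move=> h3; have : 0 < c * ln (ln R1) by apply: le_lt_trans h1.
  by rewrite pmulr_lgt0.
exists R1; split => // r hr.
have [h1 h2] := key r hr.
have s1 : ln (T r) <= logp (T r).
  rewrite /logp; case: ifP => // /negbT; rewrite -leNgt => h.
  exact: ln_le0.
apply: le_trans s1 _.
set v := logp (T r).
have v0 : 0 <= v := logp_ge0 _.
case: (ltrP 1 v) => hv.
  have : ln v < c * ln (ln r) by move: h1; rewrite /logp hv.
  rewrite -ltr_expR lnK ?posrE; last by apply: lt_trans hv.
  have := expR_gt0 (c * ln (ln r)); lra.
have := expR_gt0 (c * ln (ln r)); lra.
Qed.
End Growth.
Section H.
Variable R : realType.

Lemma bern (q x y : R) : 0 <= q -> 0 < x -> x <= y ->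
  q * (y - x) * expR (-(q+1) * ln y) <= expR (-q * ln x) - expR (-q * ln y).
Proof.
move=> q0 x0 xy.
have y0 : 0 < y by apply: lt_le_trans xy.
have h1 : (y - x) / y <= ln y - ln x.
  have hxy : -1 < x / y - 1 by rewrite ltrBrDl addrN divr_gt0.
  have := le_ln1Dx hxy.
  have -> : 1 + (x / y - 1) = x / y by ring.
  rewrite lnM ?posrE ?invr_gt0 // lnV ?posrE //.
  have -> : (y - x) / y = 1 - x / y by rewrite mulrBl divff ?gt_eqF.
  lra.
have h2 : expR (-q * ln x) = expR (-q * ln y) * expR (q * (ln y - ln x)).
  by rewrite -expRD; congr expR; ring.
have h3 : expR (-(q+1) * ln y) = expR (-q * ln y) / y.
  have -> : -(q+1) * ln y = -q * ln y + - ln y by ring.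
  by rewrite expRD expRN lnK ?posrE.
rewrite h2 h3.
have e0 : 0 < expR (- q * ln y) by apply: expR_gt0.
have := expR_ge1Dx (q * (ln y - ln x)).
set E := expR (- q * ln y).
move=> h4.
have h5 : q * ((y - x) / y) <= q * (ln y - ln x) by apply: ler_wpM2l.
have -> : q * (y - x) * (E / y) = E * (q * ((y - x)/y)) by rewrite mulrA; field; rewrite gt_eqF.
rewrite -[X in _ <= _ - X]mulr1 -mulrBr; apply: ler_wpM2l; [exact: ltW | lra].
Qed.

Lemma ln1p_ge (t : R) : 0 <= t <= 1 -> t / 2 <= ln (1 + t).
Proof.
move=> /andP[t0 t1].
have p : 0 < 1 + t by lra.
have hi : 0 < (1 + t)^-1 by rewrite invr_gt0.
have hxy : -1 < (1 + t)^-1 - 1 by lra.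
have := le_ln1Dx hxy.
have -> : 1 + ((1 + t)^-1 - 1) = (1 + t)^-1 by ring.
rewrite lnV ?posrE // => h.
have h2 : t / (1+t) <= ln (1 + t).
  have -> : t / (1 + t) = 1 - (1 + t)^-1 by field; rewrite gt_eqF.
  lra.
apply: le_trans h2.
apply: ler_wpM2l => //.
by rewrite lef_pV2 ?posrE //; lra.
Qed.

Lemma le_expR_div (b u : R) : 0 < b -> u <= expR (b * u) / b.
Proof.
move=> b0; rewrite ler_pdivlMr //.
have := expR_ge1Dx (b * u); lra.
Qed.

Lemma telesc (g : nat -> R) n :
  \sum_(0 <= i < n) (g i - g i.+2) = g 0%N + g 1%N - g n - g n.+1.
Proof.
elim: n => [|n IH]; first by rewrite big_nil; lra.
by rewrite big_nat_recr //= IH; lra.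
Qed.


Lemma ln_ge1' {x : R} : expR 1 <= x -> 1 <= ln x.
Proof.
move=> h; have x0 : 0 < x by apply: lt_le_trans (expR_gt0 _) h.
by rewrite -(expRK 1) ler_ln ?posrE ?expR_gt0.
Qed.

Lemma keyineq (c d' q b D L L2 T0 T2 : R) :
  0 < c -> 0 < q -> 0 < b -> d' + c * (q + 1) = 1 - b -> 0 <= d' ->
  expR 1 <= L -> L2 <= 4 * L -> L <= L2 ->
  0 < T0 -> 1 <= ln T0 + D ->
  ln T2 <= 1 + expR (c * ln L2) ->
  T0 * (1 + expR (- d' * ln L)) < T2 ->
  ln (L + ln L) - ln L <=
   (2 * expR ((q+1) * ln (1 + `|D| + expR (c * ln 4))) / (q * b)) *
   (expR (- q * ln (ln T0 + D)) - expR (- q * ln (ln T2 + D))).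
Proof.
move=> c0 q0 b0 hd d0 eL hL2 hLL2 T00 ha0 hT2 bad.
set M := 1 + `|D| + expR (c * ln 4).
have L0 : 0 < L by apply: lt_le_trans (expR_gt0 _) eL.
have L20 : 0 < L2 by apply: lt_le_trans hLL2.
set lL := ln L.
have lL1 : 1 <= lL := ln_ge1' eL.
set th := expR (- d' * lL).
have th0 : 0 < th := expR_gt0 _.
have th1 : th <= 1 by rewrite /th -expR0 ler_expR; nra.
have T20 : 0 < T2 by apply: lt_trans bad; apply: mulr_gt0 => //; lra.
have hT : ln T0 + th / 2 <= ln T2.
  have h1 : ln (T0 * (1 + th)) <= ln T2.
    by rewrite ler_ln ?posrE ?ltW //; apply: mulr_gt0 => //; lra.
  rewrite lnM ?posrE // in h1; last lra.
  have := @ln1p_ge th; rewrite th1 ltW //= => /(_ isT); lra.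
set a0 := ln T0 + D.
set a2 := ln T2 + D.
have a00 : 0 < a0 by rewrite /a0; lra.
have a02 : a0 <= a2 by rewrite /a2 /a0; lra.
have hb := @bern q a0 a2 (ltW q0) a00 a02.
set X := expR (c * lL).
have X1 : 1 <= X by rewrite /X -expR0 ler_expR; nra.
have hlnL2 : ln L2 <= ln 4 + lL.
  rewrite -lnM ?posrE //.
  by rewrite ler_ln ?posrE //; nra.
have E0 : 0 < expR (c * ln 4) := expR_gt0 _.
have hEX : expR (c * ln L2) <= expR (c * ln 4) * X.
  by rewrite /X -expRD ler_expR; nra.
have absD : D <= `|D| := ler_norm D.
have absD0 : 0 <= `|D| := normr_ge0 D.
have ha2 : a2 <= M * X.
  rewrite /a2 /M; nra.
have M0 : 0 < M by rewrite /M; lra.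
have a20 : 0 < a2 by lra.
have hlna2 : ln a2 <= ln M + c * lL.
  have : ln a2 <= ln (M * X) by rewrite ler_ln ?posrE //; nra.
  by rewrite lnM ?posrE ?expR_gt0 // /X expRK.
have hexp : expR (-(q+1) * (ln M + c * lL)) <= expR (-(q+1) * ln a2).
  by rewrite ler_expR; nra.
set K := 2 * expR ((q + 1) * ln M) / (q * b).
have K0 : 0 < K by rewrite /K; apply: divr_gt0; [apply: mulr_gt0 => //; exact: expR_gt0 | exact: mulr_gt0].
have Ea : expR ((q+1) * ln M) * expR (-(q+1) * (ln M + c * lL)) * th =
    expR (b * lL) * expR (- lL).
  rewrite /th -!expRD; congr expR.
  have -> : d' = 1 - b - c * (q + 1) by lra.
  ring.
have Eb : K * (q * (th / 2) * expR (-(q+1) * (ln M + c * lL))) =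
    expR (b * lL) / b * expR (- lL).
  rewrite /K [RHS]mulrAC -Ea; field; by rewrite !lt0r_neq0.
have hL : ln (L + lL) - lL <= expR (b * lL) / b * expR (- lL).
  have hx0 : 0 <= lL / L by apply: divr_ge0; [lra | exact: ltW].
  have hx : -1 < lL / L by lra.
  have := le_ln1Dx hx.
  have -> : L + lL = L * (1 + lL / L) by field; apply: lt0r_neq0.
  rewrite lnM ?posrE //; last lra.
  have -> : lL / L = lL * expR (- lL) by rewrite expRN lnK ?posrE.
  have h := @le_expR_div b lL b0.
  have := expR_gt0 (- lL).
  move=> he h2.
  have : lL * expR (- lL) <= expR (b * lL) / b * expR (- lL).
    by apply: ler_wpM2r => //; exact: ltW.
  move=> h3; rewrite -/lL; lra.
apply: le_trans hL _.
rewrite -Eb; apply: ler_wpM2l; first exact: ltW.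
apply: le_trans hb.
have hq : 0 <= q * (th / 2) by apply: mulr_ge0; [exact: ltW | lra].
have hd2 : th / 2 <= a2 - a0 by rewrite /a2 /a0; lra.
apply: ler_pM => //.
- by apply: ler_wpM2l => //; exact: ltW.
Qed.
End H.
Section H6.
Variable R : realType.
Lemma finalineq (d d' eps L lr : R) : 0 < d -> d < d' -> 0 < eps -> 1 <= lr ->
  lr <= 2 * L -> 0 < L ->
  (d * ln 2 - ln eps) / (d' - d) <= ln L ->
  expR (- d' * ln L) * lr `^ d <= eps.
Proof.
move=> d0 dd e0 lr1 lrL L0 hT.
have lr0 : 0 < lr by lra.
rewrite /powR gt_eqF // -expRD -[X in _ <= X](@lnK _ eps) ?posrE // ler_expR.
have h1 : ln lr <= ln 2 + ln L.
  by rewrite -lnM ?posrE // ler_ln ?posrE //; nra.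
rewrite ler_pdivrMr in hT; last lra.
nra.
Qed.
End H6.

Lemma mf_sub {R : realType} (A : set R) : A `<=` `[expR 1, +oo[ ->
  measurable_fun A (EFin \o (fun t : R => (t * ln t)^-1)).

Proof.
move=> hA.
apply/measurable_EFinP.
have H : measurable_fun (`]1, +oo[%classic : set R) (fun t : R => (t * ln t)^-1).
  apply: open_continuous_measurable_fun; first exact: rray_open.
  move=> x; rewrite inE /= in_itv /= andbT => hx.
  exact: cont_f.
apply: (measurable_funS _ _ H).
- exact: measurable_itv.
- move=> x /hA; rewrite /= !in_itv /= andbT => hx.
  rewrite andbT; apply: lt_le_trans hx; by rewrite -expR0 ltr_expR.
Qed.

Lemma f_ge0 {R : realType} (x : R) : expR 1 <= x -> (0 <= ((x * ln x)^-1)%:E)%E.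
Proof.
move=> hx; rewrite lee_fin invr_ge0; apply: mulr_ge0.
  by apply: le_trans hx; apply: ltW; exact: expR_gt0.
by have := ln_gt1 hx; lra.
Qed.


Lemma four {R : realType} (a b c d : R) : a <= 1 -> b <= 1 -> 0 <= c -> 0 <= d -> a + b - c - d <= 2.
Proof. move=> *; lra. Qed.

Lemma lemA {R : realType} (r l : R) : 0 < r -> 1 <= l -> r <= r * l.
Proof. move=> *; nra. Qed.

Lemma lemB {R : realType} (a b c d t : R) : a <= b -> b <= c -> c <= d * (1 + t) ->
  d <= a -> 0 <= t -> 0 <= d -> b - a <= a * t.
Proof. move=> *; nra. Qed.

Lemma lemC {R : realType} (Tr P th eps : R) : 0 <= Tr -> 0 < P -> th * P <= eps ->
  Tr * th <= eps * (Tr / P).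
Proof.
move=> h0 hP h; rewrite mulrA [eps * Tr]mulrC -mulrA.
apply: ler_wpM2l => //; rewrite ler_pdivlMr //.
Qed.

Unset Implicit Arguments.
Theorem lemma3p1 (R : realType) (T : R -> R)
  (Tmono : forall x y : R, expR 1 <= x -> x <= y -> T x <= T y)
  (Tcont : {within `[expR 1, +oo[, continuous T})
  (Tnn : forall r : R, expR 1 <= r -> 0 <= T r)
  (Hsig : (sigma2log T < 1%:E)%E)
  (delta : R) (Hd0 : 0 < delta) (Hd1 : (delta%:E < 1%:E - sigma2log T)%E) :
  exists F : set R,
    [/\ measurable F, F `<=` `[expR 1, +oo[,
        (\int[lebesgue_measure]_(t in F) ((t * ln t)^-1)%:E < +oo)%E &
        forall eps : R, 0 < eps ->
          \forall r \near +oo%R, ~ F r ->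
            `|T (r * ln r) - T r| <= eps * (T r / (ln r) `^ delta)].
Proof.
have [c [hsc hcd]] := choose_c Hsig Hd1.
have [c0 [R1 [R1e HG]]] := growth hsc.
pose d' := (delta + 1 - c) / 2.
pose b := (1 - d' - c) / 2.
pose q := b / c.
have hdd : delta < d' by rewrite /d'; lra.
have b0 : 0 < b by rewrite /b /d'; lra.
have q0 : 0 < q by rewrite /q divr_gt0.
have hsum : d' + c * (q + 1) = 1 - b.
  have : c * q = b by rewrite /q mulrCA divff ?mulr1 // gt_eqF.
  rewrite mulrDr mulr1 /b; lra.
have d'0 : 0 <= d' by lra.
have e0 : 0 < expR 1 :> R by exact: expR_gt0.
case: (pselect (exists x1, expR 1 <= x1 /\ 0 < T x1)) => [[x1 [ex1 Tx1]] | nT]; last first.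
  have T0 : forall x, expR 1 <= x -> T x = 0.
    move=> x ex; apply/eqP; rewrite eq_le Tnn // andbT leNgt; apply/negP => h.
    by apply: nT; exists x.
  exists set0; split.
  - exact: measurable0.
  - by [].
  - by rewrite integral_set0 ltry.
  - move=> eps eps0; exists (expR 1); split; first by rewrite num_real.
    move=> r hr _.
    have er : expR 1 <= r by exact: ltW.
    have lr := ln_gt1 er.
    have err : expR 1 <= r * ln r by nra.
    by rewrite !T0 // subr0 normr0 mul0r mulr0.
pose L0 := Num.max (expR 1) (Num.max (ln R1) (ln x1)).
have eL0 : expR 1 <= L0 by rewrite /L0 le_max lexx.
have lnR1 : ln R1 <= L0 by rewrite /L0 !le_max lexx orbT.
have lnx1 : ln x1 <= L0 by rewrite /L0 !le_max lexx !orbT.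
pose L := seqL L0.
have x10 : 0 < x1 by apply: lt_le_trans ex1.
have R10 : 0 < R1 by apply: lt_trans R1e.
have Lmon : forall i j, (i <= j)%N -> expR (L i) <= expR (L j).
  by move=> i j ij; rewrite ler_expR; apply: Lmono.
have eLk : forall k, expR 1 <= expR (L k).
  by move=> k; rewrite ler_expR; apply: le_trans (Lge eL0 k); rewrite -expR0 ler_expR.
have x1L : forall k, x1 <= expR (L k).
  move=> k; apply: le_trans (Lmon 0%N k isT).
  by rewrite -[X in X <= _](@lnK _ x1) ?posrE // ler_expR.
have R1L : forall k, R1 <= expR (L k).
  move=> k; apply: le_trans (Lmon 0%N k isT).
  by rewrite -[X in X <= _](@lnK _ R1) ?posrE // ler_expR.
have Tpos : forall k, 0 < T (expR (L k)).
  by move=> k; apply: lt_le_trans Tx1 _; apply: Tmono.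
pose D := 1 - ln (T (expR L0)).
pose al := fun k => ln (T (expR (L k))) + D.
have almono : forall i j, (i <= j)%N -> al i <= al j.
  move=> i j ij; rewrite /al lerD2r ler_ln ?posrE //.
  by apply: Tmono => //; apply: Lmon.
have al1 : forall k, 1 <= al k.
  move=> k; apply: le_trans (almono 0%N k isT).
  by rewrite /al /D; have -> : L 0%N = L0 by []; lra.
pose G := fun a : R => expR (- q * ln a).
have G01 : forall k, 0 <= G (al k) <= 1.
  move=> k; rewrite /G; apply/andP; split; first exact: ltW (expR_gt0 _).
  rewrite -expR0 ler_expR; have := ln_ge0 (al1 k); nra.
pose bad := fun k => T (expR (L k)) * (1 + expR (- d' * ln (L k))) < T (expR (L k.+2)).
pose B := fun k => if bad k then `[expR (L k), expR (L k.+1)[%classic else set0.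
have memB : forall k x, B k x -> expR (L k) <= x < expR (L k.+1).
  by move=> k x; rewrite /B; case: ifP => // _; rewrite /= in_itv.
have Bsub : \bigcup_k B k `<=` `[expR 1, +oo[.
  move=> x [k _ /memB /andP[h1 _]]; rewrite /= in_itv /= andbT.
  exact: le_trans (eLk k) h1.
pose K := 2 * expR ((q+1) * ln (1 + `|D| + expR (c * ln 4))) / (q * b).
have K0 : 0 <= K.
  rewrite /K; apply: divr_ge0; last by apply: mulr_ge0; apply: ltW.
  by apply: mulr_ge0 => //; apply: ltW; exact: expR_gt0.
pose dk := fun k => G (al k) - G (al k.+2).
have dk0 : forall k, 0 <= dk k.
  move=> k; rewrite /dk /G subr_ge0 ler_expR.
  have : ln (al k) <= ln (al k.+2).
    have p0 : 0 < al k by apply: lt_le_trans (al1 k).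
    have p2 : 0 < al k.+2 by apply: lt_le_trans (al1 k.+2).
    rewrite ler_ln ?posrE //; apply: almono; exact: leqW (leqnSn k).
  nra.
have KB : forall k, (\int[lebesgue_measure]_(x in B k) ((x * ln x)^-1)%:E <= (K * dk k)%:E)%E.
  move=> k; rewrite /B; case: ifP => hbad; last first.
    by rewrite integral_set0 lee_fin; apply: mulr_ge0.
  have ab : expR (L k) < expR (L k.+1) by rewrite ltr_expR /L; have := Lstep eL0 k; lra.
  apply: le_trans (ge0_subset_integral _ _ _ _ _ _) _.
  - exact: measurable_itv.
  - exact: (measurable_itv `[expR (L k), expR (L k.+1)]).
  - apply: mf_sub => x; rewrite /= !in_itv /= => /andP[h1 _].
    by rewrite andbT; apply: le_trans (eLk k) h1.
  - move=> x; rewrite /= in_itv /= => /andP[h1 _]; apply: f_ge0.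
    exact: le_trans (eLk k) h1.
  - by apply: subset_itvl; rewrite bnd_simp.
  rewrite int_loglog // !expRK lee_fin /L LS.
  apply: (@keyineq _ c d' q b D (L k) (L k.+2) (T (expR (L k))) (T (expR (L k.+2)))) => //.
  - exact: Lge.
  - rewrite /L; have := Ldouble eL0 k; have := Ldouble eL0 k.+1; have := Lpos eL0 k; nra.
  - exact: (Lmono eL0 (leqW (leqnSn k))).
  - exact: al1.
  - have := HG _ (R1L k.+2); by rewrite !expRK.
exists (\bigcup_k B k); split.
- by apply: bigcup_measurable => k _; rewrite /B; case: ifP => _ //; exact: measurable_itv.
- exact: Bsub.
- rewrite ge0_integral_bigcup //; first last.
  + move=> i j _ _ [x [/memB hi /memB hj]].
    case: (ltngtP i j) => // ij; exfalso.
    * have := Lmon _ _ ij; move: hi hj => /andP[_ h1] /andP[h2 _] h3.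
      have := lt_le_trans (lt_le_trans h1 h3) h2; by rewrite ltxx.
    * have := Lmon _ _ ij; move: hi hj => /andP[h1 _] /andP[_ h2] h3.
      have := lt_le_trans (lt_le_trans h2 h3) h1; by rewrite ltxx.
  + move=> x /Bsub; rewrite /= in_itv /= andbT; exact: f_ge0.
  + Timeout 30 exact: (mf_sub Bsub).
  + by move=> k; rewrite /B; case: ifP => _ //; exact: measurable_itv.
  apply: (@le_lt_trans _ _ (2 * K)%:E); last exact: ltry.
  Timeout 30 apply: lime_le.
    Timeout 30 by apply: is_cvg_nneseries => n _ _; apply: integral_ge0 => x /memB /andP[h _];
      apply: f_ge0; apply: le_trans (eLk n) h.
  apply: nearW => n.
  Timeout 30 apply: le_trans (lee_sum _ (fun i _ => KB i)) _.
  rewrite sumEFin lee_fin -mulr_sumr [X in _ <= X]mulrC.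
  apply: ler_wpM2l => //.
  have := telesc (fun i => G (al i)) n.
  rewrite /dk => ->.
  move: (G01 0%N) (G01 1%N) (G01 n) (G01 n.+1) => /andP[_ h1] /andP[_ h2] /andP[h3 _] /andP[h4 _].
  exact: four.
- move=> eps eps0.
  pose Th := (delta * ln 2 - ln eps) / (d' - delta).
  exists (expR (2 * expR Th) + expR L0); split; first by rewrite num_real.
  move=> r hr nF.
  have hE := expR_gt0 (2 * expR Th).
  have hL0r : expR L0 < r by apply: le_lt_trans hr; rewrite lerDr; exact: ltW.
  have hEr : expR (2 * expR Th) < r.
    by apply: le_lt_trans hr; rewrite lerDl; apply: ltW; exact: expR_gt0.
  have r0 : 0 < r by apply: lt_trans (expR_gt0 _) hL0r.
  have er' : expR (ln r) = r by rewrite lnK // posrE.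
  have lnr : L0 <= ln r by rewrite -ler_expR er'; exact: ltW.
  have [k /andP[hk1 hk2]] := block eL0 lnr.
  have hrk : expR (L k) <= r by rewrite -er' ler_expR.
  have hrk2 : r < expR (L k.+1) by rewrite -er' ltr_expR.
  have nbad : ~~ bad k.
    apply/negP => hb; apply: nF; exists k => //.
    by rewrite /B hb /= in_itv /= hrk hrk2.
  have er : expR 1 <= r := le_trans (eLk k) hrk.
  have lr1 : 1 <= ln r := ln_gt1 er.
  have hrl : r <= r * ln r by apply: lemA.
  have hrl2 : r * ln r <= expR (L k.+2).
    rewrite /L (rS eL0 k.+1); apply: ler_pM.
    - exact: ltW.
    - by apply: le_trans lr1.
    - exact: ltW.
    - exact: ltW.
  have T1 : T r <= T (r * ln r) := Tmono _ _ er hrl.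
  have T2 : T (r * ln r) <= T (expR (L k.+2)) := Tmono _ _ (le_trans er hrl) hrl2.
  have T3 : T (expR (L k)) <= T r := Tmono _ _ (eLk k) hrk.
  have T4 : T (expR (L k.+2)) <= T (expR (L k)) * (1 + expR (- d' * ln (L k))).
    by rewrite leNgt.
  have th0 : 0 <= expR (- d' * ln (L k)) by apply: ltW; exact: expR_gt0.
  have Tr0 : 0 <= T r := Tnn _ er.
  have hdiff : `|T (r * ln r) - T r| <= T r * expR (- d' * ln (L k)).
    rewrite ger0_norm; last by rewrite subr_ge0.
    apply: lemB T1 T2 T4 T3 th0 _.
    exact: ltW (Tpos k).
  have LkTh : Th <= ln (L k).
    have h1 : 2 * expR Th < ln r by rewrite -ltr_expR er'.
    have h2 : ln r <= 2 * L k by apply: ltW; apply: lt_le_trans hk2 (Ldouble eL0 k).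
    have h3 : expR Th <= L k.
      move: h1 h2; rewrite /L; set u := expR Th; set v := seqL L0 k; move=> h1 h2.
      have : 2 * u < 2 * v by apply: lt_le_trans h1 h2.
      by rewrite ltr_pM2l // => /ltW.
    by rewrite -ler_expR lnK // posrE; exact: Lpos.
  have hfin : expR (- d' * ln (L k)) * (ln r) `^ delta <= eps.
    apply: finalineq => //.
    - by apply: ltW; apply: lt_le_trans hk2 (Ldouble eL0 k).
    - exact: Lpos.
  apply: le_trans hdiff _.
  apply: lemC => //.
  by apply: powR_gt0; apply: lt_le_trans lr1.
Qed.
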